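(* Let $\alpha \ge 1$ and let $\mathcal{F}$ be a $k$-uniform hypergraph on $[n]$. Let $\mathcal{P}_{\mathcal{F}}$ be the partition of $[n]$ into the equivalence classes of the relation in which $i \sim j$ if and only if $i=j$ or the transposition $(ij)$ is an automorphism of $\mathcal{F}$. Then there is $\vec{w}\in\mathbb{R}^n$ with $\|\vec{w}\|_\alpha = 1$ and $w_t \ge 0$ for all $1\le t\le n$ such that $\tau_{\mathcal{F}}(\vec{w},\dots,\vec{w}) = \lambda_\alpha(\mathcal{F})$ and $\vec{w}$ is constant on each part of $\mathcal{P}_{\mathcal{F}}$.
   Context: For a $k$-uniform hypergraph $\mathcal{F}$ on $[n]$ and $x\in\mathbb{R}^n$, $\tau_{\mathcal{F}}(x,\dots,x) = k!\sum_{\{i_1,\dots,i_k\}\in E(\mathcal{F})}x_{i_1}\cdots x_{i_k}$, and $\lambda_\alpha(\mathcal{F}) = \max\{\tau_{\mathcal{F}}(x,\dots,x) : \|x\|_\alpha = 1\}$ where $\|x\|_\alpha = (\sum_i|x_i|^\alpha)^{1/\alpha}$. *)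

(* Defs.v *)
From HB Require Import structures.
From mathcomp Require Import all_boot all_order all_algebra all_fingroup.
From mathcomp Require Import all_classical all_reals all_analysis.
Set Implicit Arguments. Unset Strict Implicit. Unset Printing Implicit Defensive.
Import Order.TTheory GRing.Theory Num.Theory.
Local Open Scope ring_scope.
Local Open Scope classical_set_scope.

Definition uniform (n k : nat) (E : {set {set 'I_n}}) : Prop :=
  forall e, e \in E -> #|e| = k.

Definition tau {R : realType} (n k : nat) (E : {set {set 'I_n}}) (x : 'I_n -> R) : R :=
  (k`!)%:R * \sum_(e in E) \prod_(i in e) x i.

Definition anorm {R : realType} (n : nat) (alpha : R) (x : 'I_n -> R) : R :=
  (\sum_(i < n) `|x i| `^ alpha) `^ (alpha^-1).

Definition lambda {R : realType} (n k : nat) (alpha : R) (E : {set {set 'I_n}}) : R :=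
  sup [set tau k E x | x in [set x : 'I_n -> R | anorm alpha x = 1]].

Definition is_aut (n : nat) (E : {set {set 'I_n}}) (s : {perm 'I_n}) : Prop :=
  forall e : {set 'I_n}, (e \in E) = ((s @: e) \in E).

Definition transp_equiv (n : nat) (E : {set {set 'I_n}}) (i j : 'I_n) : Prop :=
  i = j \/ is_aut E (tperm i j).
Arguments transp_equiv {n} E i j.
Arguments is_aut {n} E s.
Arguments uniform {n} k E.
Arguments tau {R n} k E x.
Arguments anorm {R n} alpha x.
Arguments lambda {R n} k alpha E.

(* Main.v *)
Require Import Defs.
From HB Require Import structures.
From mathcomp Require Import all_boot all_order all_algebra all_fingroup.
From mathcomp Require Import all_classical all_reals all_analysis.
From mathcomp Require Import ring lra.
Import Order.TTheory GRing.Theory Num.Theory.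
Local Open Scope ring_scope.
Import numFieldNormedType.Exports.
Local Open Scope classical_set_scope.

Lemma powR_mid (R : realType) (al a b : R) : 1 <= al -> 0 <= a -> 0 <= b ->
  ((a + b) / 2) `^ al <= (a `^ al + b `^ al) / 2.
Proof.
move=> al1 a0 b0.
have h2 : (0:R) <= 2^-1 by rewrite invr_ge0.
have h2' : (2^-1:R) <= 1 by rewrite invf_le1 // ler1n.
have := @convex_powR R al al1 (Itv01 h2 h2') a b.
rewrite !inE /= !in_itv /= !andbT => /(_ a0 b0).
rewrite !convRE /=.
rewrite /conv /= /unstable.onem.
rewrite /GRing.scale /=.
have -> : 1 - 2^-1 = 2^-1 :> R by field.
have -> : (a + b) / 2 = 2^-1 * a + 2^-1 * b by field.
have -> : (a `^ al + b `^ al) / 2 = 2^-1 * a `^ al + 2^-1 * b `^ al by field.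
by [].
Qed.
Lemma cont_powRn (R : realType) (p : R) : 0 < p -> continuous (fun x : R => `|x| `^ p).
Proof.
move=> p0 x; have [->|x0] := eqVneq x 0.
  apply/cvgrPdist_lt => e e0.
  exists (e `^ p^-1) => /=; first by rewrite powR_gt0.
  move=> y; rewrite /ball /= sub0r normrN normr0 powR0 ?gt_eqF// sub0r normrN.
  move=> hy; rewrite ger0_norm ?powR_ge0//.
  have -> : e = (e `^ p^-1) `^ p by rewrite -powRrM mulVf ?gt_eqF// powRr1 // ltW.
  by apply: gt0_ltr_powR => //; rewrite nnegrE ?powR_ge0.
apply: (@continuous_comp _ _ _ (fun y : R => `|y|) (fun y : R => y `^ p)); first exact: norm_continuous.
apply: differentiable_continuous; rewrite -derivable1_diffP.
by apply: derivable_powR; rewrite in_itv /= andbT normr_gt0.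
Qed.
Lemma prod_split (R : realType) n (e : {set 'I_n}) (i j : 'I_n) (x : 'I_n -> R) :
  i != j ->
  \prod_(t in e) x t = ((if i \in e then x i else 1) * (if j \in e then x j else 1))
     * \prod_(t in e | (t != i) && (t != j)) x t.
Proof.
move=> ij.
rewrite (bigID (fun t => t == i)) /= [X in _ * X](bigID (fun t => t == j)) /= mulrA.
have ji : j != i by rewrite eq_sym.
congr (_ * _ * _).
- case: ifP => ie.
    by rewrite (big_pred1 i) // => t /=; have [->|ti] := eqVneq t i; rewrite ?ie ?andbF.
  by rewrite big_pred0 // => t /=; have [->|ti] := eqVneq t i; rewrite ?ie ?andbF.
- case: ifP => je.
    by rewrite (big_pred1 j) // => t /=; have [->|tj] := eqVneq t j; rewrite ?je ?ji ?andbF.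
  by rewrite big_pred0 // => t /=; have [->|tj] := eqVneq t j; rewrite ?je ?andbF.
- by apply: eq_bigl => t; rewrite andbA.
Qed.

Definition wr {n} {R : realType} (w : 'I_n -> R) (i j : 'I_n) (m : R) :=
  fun t => if (t == i) || (t == j) then m else w t.

Lemma sum_sym_le (R : realType) n (E : {set {set 'I_n}}) (w : 'I_n -> R) (i j : 'I_n) (m : R) :
  i != j -> is_aut E (tperm i j) -> (forall t, 0 <= w t) -> 0 <= m ->
  w i + w j <= 2 * m ->
  \sum_(e in E) \prod_(t in e) w t <= \sum_(e in E) \prod_(t in e) wr w i j m t.
Proof.
move=> ij aut w0 m0 hm.
set s := tperm i j.
have H : \sum_(e in E) \prod_(t in e) w t = \sum_(e in E) \prod_(t in e) w (s t).
  rewrite (reindex_inj (imset_inj (@perm_inj _ s))) /=.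
  apply: eq_big => e; first by rewrite -aut.
  by move=> _; rewrite big_imset //; move=> x y _ _; apply: perm_inj.
suff : 2 * \sum_(e in E) \prod_(t in e) w t <= 2 * \sum_(e in E) \prod_(t in e) wr w i j m t.
  by rewrite ler_pM2l.
rewrite mulr_natl mulr2n {2}H -big_split /= mulr_sumr.
apply: ler_sum => e _.
have ji : j != i by rewrite eq_sym.
rewrite !(@prod_split R n e i j _ ij).
have P1 : \prod_(t in e | (t != i) && (t != j)) w (s t) = \prod_(t in e | (t != i) && (t != j)) w t.
  apply: eq_bigr => t /andP[_ /andP[ti tj]]; have it : i != t by rewrite eq_sym.
  have jt : j != t by rewrite eq_sym.
  by rewrite /s tpermD.
have P2 : \prod_(t in e | (t != i) && (t != j)) wr w i j m t = \prod_(t in e | (t != i) && (t != j)) w t.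
  by apply: eq_bigr => t /andP[_ /andP[ti tj]]; rewrite /wr (negbTE ti) (negbTE tj).
rewrite P1 P2 /s tpermL tpermR /wr !eqxx orbT /=.
set P := \prod_(t in e | _) w t.
have P0 : 0 <= P by apply: prodr_ge0 => t _.
have wi := w0 i; have wj := w0 j.
case: (i \in e); case: (j \in e); rewrite ?mul1r ?mulr1.
all: have mm : w i * w j <= m * m.
all: try (have q1 : 0 <= (2 * m - (w i + w j)) * (2 * m + (w i + w j)) by rewrite mulr_ge0 // ?subr_ge0 // addr_ge0 // ?addr_ge0 // mulr_ge0).
all: try (have q2 := sqr_ge0 (w i - w j)).
all: try nra.
all: have h1 : 0 <= (m * m - w i * w j) * P by rewrite mulr_ge0 // subr_ge0.
all: have h2 : 0 <= (2 * m - w i - w j) * P by rewrite mulr_ge0 // subr_ge0 lerBrDr -addrA addrC.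
all: nra.
Qed.

Lemma sum_split (R : realType) n (i j : 'I_n) (f : 'I_n -> R) : i != j ->
  \sum_(t < n) f t = f i + f j + \sum_(t < n | (t != i) && (t != j)) f t.
Proof.
move=> ij; rewrite (bigD1 i) //= (bigD1 j) /=; last by rewrite eq_sym.
by rewrite addrA.
Qed.

Lemma sphere (R : realType) (al : R) n (x : 'I_n -> R) : 0 < al ->
  anorm al x = 1 -> \sum_(t < n) `|x t| `^ al = 1.
Proof.
rewrite /anorm => al0 h.
have s0 : 0 <= \sum_(t < n) `|x t| `^ al by apply: sumr_ge0 => t _; exact: powR_ge0.
have e : al^-1 * al = 1 by rewrite mulVf ?gt_eqF.
by rewrite -[LHS](powRr1 s0) -[in LHS]e powRrM h powR1.
Qed.

Lemma ng0 (R : realType) n (x : 'I_n -> R) :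
  \sum_(t < n) (`|x t| - x t) = 0 <-> forall t, 0 <= x t.
Proof.
split.
  move=> /psumr_eq0P h t.
  have : `|x t| - x t = 0 by apply: h => // s _; rewrite subr_ge0 ler_norm.
  by move/eqP; rewrite subr_eq0 => /eqP <-.
by move=> h; apply: big1 => t _; rewrite ger0_norm // subrr.
Qed.
Theorem corollary12 (R : realType) (alpha : R) (n k : nat)
    (E : {set {set 'I_n}}) :
  1 <= alpha -> (0 < n)%N -> uniform k E ->
  exists w : 'I_n -> R,
    [/\ anorm alpha w = 1,
        (forall t, 0 <= w t),
        tau k E w = lambda k alpha E
      & forall i j, transp_equiv E i j -> w i = w j].
Proof.
move=> al1 n0 _.
have al0 : 0 < alpha by apply: lt_le_trans al1.
pose co (v : 'rV[R]_n) : 'I_n -> R := fun t => v ord0 t.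
pose nrm (v : 'rV[R]_n) := \sum_(t < n) `|v ord0 t| `^ alpha.
pose ng (v : 'rV[R]_n) := \sum_(t < n) (`|v ord0 t| - v ord0 t).
pose S := [set v : 'rV[R]_n | nrm v = 1 /\ ng v = 0].
pose T (v : 'rV[R]_n) := tau k E (co v).
pose h (v : 'rV[R]_n) := \sum_(t < n) (`|v ord0 t| `^ alpha) ^+ 2.
have cc t : continuous (fun v : 'rV[R]_n => v ord0 t) := @coord_continuous R 1 n ord0 t.
have cp t : continuous (fun v : 'rV[R]_n => `|v ord0 t| `^ alpha).
  move=> v; apply: (@continuous_comp _ _ _ (fun v : 'rV[R]_n => v ord0 t) (fun y : R => `|y| `^ alpha)).
    exact: cc.
  exact: cont_powRn.
have cnrm : continuous nrm.
  by apply: continuous_big => [|t _]; [exact: add_continuous | exact: cp].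
have cn t : continuous (fun v : 'rV[R]_n => `|v ord0 t|).
  move=> v; apply: (@continuous_comp _ _ _ (fun v : 'rV[R]_n => v ord0 t) (fun y : R => `|y|)).
    exact: cc.
  exact: norm_continuous.
have cng : continuous ng.
  apply: continuous_big => [|t _ v]; first exact: add_continuous.
  exact: (cvgB (cn t v) (cc t v)).
have ch : continuous h.
  apply: continuous_big => [|t _ v]; first exact: add_continuous.
  exact: (cvgM (cp t v) (cp t v)).
have cT : continuous T.
  have cs : continuous (fun v : 'rV[R]_n => \sum_(e in E) \prod_(t in e) co v t).
    apply: continuous_big => [|e _]; first exact: add_continuous.
    apply: continuous_big => [|t _]; first exact: mul_continuous.
    exact: cc.
  move=> v; exact: (cvgM (cvg_cst _) (cs v)).
have Sng v : S v -> forall t, 0 <= v ord0 t.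
  by move=> [_ gv]; exact: (proj1 (@ng0 R n (fun t => v ord0 t)) gv).
have Scl : closed S.
  rewrite (_ : S = nrm @^-1` [set 1] `&` ng @^-1` [set 0]) //.
  apply: closedI; apply: preimage_closed.
  - by move=> x _; exact: cnrm.
  - exact: closed_eq.
  - by move=> x _; exact: cng.
  - exact: closed_eq.
have Sb : S `<=` [set v | forall i, (`[0, 1]%classic : set R) (v ord0 i)].
  move=> v Sv i; have vi0 := Sng v Sv i; case: Sv => nv _.
  rewrite /= in_itv /= vi0 /=.
  have : `|v ord0 i| `^ alpha <= 1.
    rewrite -nv /nrm (bigD1 i) //= lerDl; apply: sumr_ge0 => t _; exact: powR_ge0.
  rewrite ger0_norm // => H; rewrite leNgt; apply/negP => H1.
  by have := le_trans (le1r_powR (ltW H1) al1) H; rewrite leNgt H1.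
have Scpt : compact S.
  apply: (subclosed_compact Scl _ Sb).
  exact: (@rV_compact R n (fun _ => `[(0:R), 1]%classic) (fun _ => @segment_compact R 0 1)).
have S0 : S !=set0.
  pose i0 : 'I_n := Ordinal n0.
  exists (\row_t (if t == i0 then 1 else 0 : R)); split.
    rewrite /nrm (bigD1 i0) //= big1 ?addr0.
      by rewrite mxE eqxx normr1 powR1.
    by move=> t tne; rewrite mxE (negbTE tne) normr0 powR0 // gt_eqF.
  apply/(@ng0 R n (fun t => (\row_t (if t == i0 then 1 else 0 : R)) ord0 t)) => t.
  by rewrite mxE; case: ifP.
have [c1 /set_mem c1S c1max] := compact_EVT_max S0 Scpt (continuous_subspaceT cT).
have Tabs (x : 'I_n -> R) : tau k E x <= tau k E (fun t => `|x t|).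
  rewrite /tau; apply: ler_wpM2l => //; apply: ler_sum => e _.
  by apply: le_trans (ler_norm _) _; rewrite normr_prod.
have rowco (f : 'I_n -> R) : co (\row_t f t) = f.
  by apply/funext => t; rewrite /co mxE.
have anS (x : 'I_n -> R) : anorm alpha x = 1 -> S (\row_t `|x t|).
  move=> hx; have {}hx := @sphere R alpha n x al0 hx; split.
    by rewrite /nrm -[RHS]hx; apply: eq_bigr => t _; rewrite mxE normr_id.
  apply/(@ng0 R n (fun t => (\row_t `|x t|) ord0 t)) => t.
  by rewrite mxE.
have anc v : S v -> anorm alpha (co v) = 1.
  move=> [nv _]; rewrite /anorm.
  by rewrite [X in X `^ _](_ : _ = nrm v) // nv powR1.
have ub : ubound [set tau k E x | x in [set x | anorm alpha x = 1]] (T c1).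
  move=> _ [x /= hx <-]; apply: le_trans (Tabs x) _.
  rewrite -(rowco (fun t => `|x t|)); apply: c1max; rewrite inE; exact: anS.
have lam : lambda k alpha E = T c1.
  have ne : [set tau k E x | x in [set x | anorm alpha x = 1]] (T c1).
    by exists (co c1) => //; exact: anc.
  rewrite /lambda; apply/le_anti/andP; split.
    by apply: ge_sup => //; exists (T c1).
  apply: sup_upper_bound => //; split; first by exists (T c1).
  by exists (T c1).
pose M := S `&` [set v | T v = T c1].
have Mcl : closed M.
  apply: closedI => //.
  have : closed (T @^-1` [set T c1]).
    by apply: preimage_closed; [move=> x _; exact: cT | exact: closed_eq].
  by [].
have Mcpt : compact M by apply: (subclosed_compact Mcl Scpt); move=> v [].
have M0 : M !=set0 by exists c1.
have [c2 /set_mem [c2S c2T] c2min] := compact_EVT_min M0 Mcpt (continuous_subspaceT ch).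
exists (co c2); split.
- exact: anc.
- exact: Sng.
- by rewrite lam -c2T.
move=> i j [->//|aut].
have [//|ne] := eqVneq (co c2 i) (co c2 j).
exfalso.
have ij : i != j by apply: contraNneq ne => ->.
have a0 : 0 <= c2 ord0 i := Sng c2 c2S i.
have b0 : 0 <= c2 ord0 j := Sng c2 c2S j.
pose A := c2 ord0 i `^ alpha; pose B := c2 ord0 j `^ alpha.
pose m := ((A + B) / 2) `^ alpha^-1.
have AB0 : 0 <= (A + B) / 2 by rewrite divr_ge0 // addr_ge0 // powR_ge0.
have m0 : 0 <= m by exact: powR_ge0.
have mA : m `^ alpha = (A + B) / 2.
  by rewrite /m -powRrM mulVf ?gt_eqF // powRr1.
have hm : c2 ord0 i + c2 ord0 j <= 2 * m.
  have H := @powR_mid R alpha _ _ al1 a0 b0.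
  have ab0 : 0 <= (c2 ord0 i + c2 ord0 j) / 2 by rewrite divr_ge0 // addr_ge0.
  have : (c2 ord0 i + c2 ord0 j) / 2 <= m.
    have -> : (c2 ord0 i + c2 ord0 j) / 2 = (((c2 ord0 i + c2 ord0 j) / 2) `^ alpha) `^ alpha^-1.
      by rewrite -powRrM mulfV ?gt_eqF // powRr1.
    apply: ge0_ler_powR => //; first by rewrite invr_ge0 ltW.
      by rewrite nnegrE powR_ge0.
  move=> H2; lra.
have ji : j != i by rewrite eq_sym.
pose v' := \row_t wr (co c2) i j m t.
have v'i : v' ord0 i = m by rewrite mxE /wr eqxx.
have v'j : v' ord0 j = m by rewrite mxE /wr eqxx orbT.
have v'o t : t != i -> t != j -> v' ord0 t = c2 ord0 t.
  by move=> ti tj; rewrite mxE /wr (negbTE ti) (negbTE tj).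
have rest (F : R -> R) : \sum_(t < n | (t != i) && (t != j)) F (v' ord0 t)
    = \sum_(t < n | (t != i) && (t != j)) F (c2 ord0 t).
  by apply: eq_bigr => t /andP[ti tj]; rewrite v'o.
have v'S : S v'.
  split.
  - rewrite -(proj1 c2S) /nrm !(@sum_split R n i j _ ij).
    rewrite (rest (fun x => `|x| `^ alpha)) v'i v'j ger0_norm // mA.
    by rewrite !ger0_norm // -/A -/B; congr (_ + _); field.
  - apply: (proj2 (@ng0 R n (fun t => v' ord0 t))) => t.
    rewrite mxE /wr; case: ifP => _ //; exact: Sng.
have Tv' : T c2 <= T v'.
  rewrite /T /v' rowco /tau; apply: ler_wpM2l => //.
  by apply: sum_sym_le => // t; exact: Sng.
have v'M : M v'.
  by split => //; apply/le_anti; rewrite c1max ?inE //= -c2T Tv'.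
have := c2min v' (mem_set v'M).
apply/negP; rewrite -ltNge.
have AB : A != B.
  apply: contra ne => /eqP AB; apply/eqP.
  by apply: (powR_injective al0); rewrite ?nnegrE.
have sq : 0 < (A - B) ^+ 2 by rewrite exprn_even_gt0 //= subr_eq0.
rewrite /h !(@sum_split R n i j _ ij).
rewrite (rest (fun x => (`|x| `^ alpha) ^+ 2)) v'i v'j !ger0_norm // mA -/A -/B.
rewrite ltrD2r.
move: sq; rewrite !expr2 => sq; nra.
Qed.
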